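(* Let $p_1,\dots,p_k$ be mutually orthogonal primitive idempotents in a finite-dimensional formally real Jordan algebra $A$ with unit $u$. Then the restriction of $\exp_u\colon(A,\|\cdot\|_u)\to(A_+^\circ,d_T)$, $x\mapsto e^x$, to $\mathrm{Span}\{p_1,\dots,p_k\}$ is an isometry. Moreover, if $x,w\in\mathrm{Span}\{p_1,\dots,p_k\}$ with $\|w\|_u=1$, then $t\mapsto e^{tw+x}$, $t\in\mathbb{R}$, is a geodesic path in $(A_+^\circ,d_T)$, i.e. $d_T(e^{tw+x},e^{sw+x})=|t-s|$ for all $s,t\in\mathbb{R}$.
   Context: $A$: finite-dimensional real vector space with commutative bilinear product $\bullet$ satisfying $x^2\bullet(x\bullet y)=x\bullet(x^2\bullet y)$, formally real, with unit $u$. $A_+=\{x^2\}$, $A_+^\circ$ its interior, $x\le y$ iff $y-x\in A_+$. Idempotents $p,q$ are orthogonal if $p\bullet q=0$; spectral decomposition $x=\sum_i\lambda_ip_i$ over a Jordan frame, $\sigma(x)=\{\lambda_i\}$, $e^x=\sum_ie^{\lambda_i}p_i$. $\|x\|_u=\max\{|\lambda|:\lambda\in\sigma(x)\}$. For $x\in A$, $y\in A_+^\circ$, $M(x/y)=\inf\{\beta:x\le\beta y\}$; $d_T(x,y)=\max\{\log M(x/y),\log M(y/x)\}$ for $x,y\in A_+^\circ$ (equivalently $d_T(x,y)=\|\log U_{y^{-1/2}}x\|_u$, with $U_zv=2z\bullet(z\bullet v)-z^2\bullet v$). *)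

(* Defs.v *)
From HB Require Import structures.
From mathcomp Require Import all_boot all_order all_algebra.
From mathcomp Require Import all_classical all_reals.
From mathcomp Require Import sequences exp.
Set Implicit Arguments. Unset Strict Implicit. Unset Printing Implicit Defensive.
Import Order.TTheory GRing.Theory Num.Theory.
Local Open Scope ring_scope.
Local Open Scope classical_set_scope.

Record FRJA (R : realType) (V : vectType R) := {
  jmul : V -> V -> V;
  jmul_linear : forall (a : R) (x1 x2 y : V),
      jmul (a *: x1 + x2) y = a *: jmul x1 y + jmul x2 y;
  jmulC : forall x y, jmul x y = jmul y x;
  jordan_id : forall x y,
      jmul (jmul x x) (jmul x y) = jmul x (jmul (jmul x x) y);
  formally_real : forall s : seq V,
      \sum_(x <- s) jmul x x = 0 -> all (fun x => x == 0) s;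
  junit : V;
  junitP : forall x, jmul junit x = x
}.
Arguments FRJA : clear implicits.

Section JordanDefs.
Variables (R : realType) (V : vectType R) (A : FRJA R V).

Local Notation "x • y" := (jmul A x y) (at level 40).

Definition jle (x y : V) : Prop := exists z : V, y - x = z • z.

Definition jidempotent (p : V) : Prop := p • p = p.

Definition jorth (p q : V) : Prop := p • q = 0.

Definition jprimitive (p : V) : Prop :=
  [/\ jidempotent p, p <> 0 &
      ~ (exists q1 q2, [/\ jidempotent q1 /\ q1 <> 0, jidempotent q2 /\ q2 <> 0,
                          jorth q1 q2 & p = q1 + q2])].

Definition jordan_frame (r : nat) (c : 'I_r -> V) : Prop :=
  [/\ forall i, jprimitive (c i),
      forall i j, i != j -> jorth (c i) (c j)
    & \sum_i c i = junit A].

Definition spectral_dec (x : V) (r : nat) (c : 'I_r -> V) (lam : 'I_r -> R) :=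
  jordan_frame c /\ x = \sum_i lam i *: c i.

Definition jspectrum (x : V) : set R :=
  [set l | exists r (c : 'I_r -> V) (lam : 'I_r -> R),
             spectral_dec x c lam /\ exists i, lam i = l].

Definition unorm (x : V) : R := sup [set `|l| | l in jspectrum x].

Definition jexp (x : V) : V :=
  xget 0 [set y | exists r (c : 'I_r -> V) (lam : 'I_r -> R),
                    spectral_dec x c lam /\ y = \sum_i expR (lam i) *: c i].

Definition Mxy (x y : V) : R := inf [set b : R | jle x (b *: y)].

Definition dT (x y : V) : R := Num.max (ln (Mxy x y)) (ln (Mxy y x)).

End JordanDefs.

(* Main.v *)
Require Import Defs.
From HB Require Import structures.
From mathcomp Require Import all_boot all_order all_algebra.
From mathcomp Require Import all_classical all_reals sequences exp.
From mathcomp Require Import complex ring lra zify.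
Import Order.TTheory GRing.Theory Num.Theory.
Local Open Scope ring_scope.
Set Implicit Arguments. Unset Strict Implicit. Unset Printing Implicit Defensive.


Section Basic.
Variables (R : realType) (V : vectType R) (A : FRJA R V).
Local Notation "x • y" := (jmul A x y) (at level 40).
Local Notation u := (junit A).

Lemma jmul0l y : 0 • y = 0.
Proof.
have := jmul_linear A 1 0 0 y; rewrite !scale1r addr0 => h.
by apply: (addrI (0 • y)); rewrite addr0 -h.
Qed.
Lemma jmulDl x1 x2 y : (x1 + x2) • y = x1 • y + x2 • y.
Proof. by have := jmul_linear A 1 x1 x2 y; rewrite !scale1r. Qed.
Lemma jmulZl a x y : (a *: x) • y = a *: (x • y).
Proof. by have := jmul_linear A a x 0 y; rewrite !addr0 jmul0l addr0. Qed.
Lemma jmulNl x y : (- x) • y = - (x • y).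
Proof. by rewrite -scaleN1r jmulZl scaleN1r. Qed.
Lemma jmulBl x1 x2 y : (x1 - x2) • y = x1 • y - x2 • y.
Proof. by rewrite jmulDl jmulNl. Qed.
Lemma jmul0r y : y • 0 = 0.
Proof. by rewrite jmulC jmul0l. Qed.
Lemma jmulDr y x1 x2 : y • (x1 + x2) = y • x1 + y • x2.
Proof. by rewrite !(jmulC A y) jmulDl. Qed.
Lemma jmulZr a y x : y • (a *: x) = a *: (y • x).
Proof. by rewrite !(jmulC A y) jmulZl. Qed.
Lemma jmulNr y x : y • (- x) = - (y • x).
Proof. by rewrite !(jmulC A y) jmulNl. Qed.
Lemma jmulBr y x1 x2 : y • (x1 - x2) = y • x1 - y • x2.
Proof. by rewrite jmulDr jmulNr. Qed.
Lemma jmul1l x : u • x = x. Proof. exact: junitP. Qed.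
Lemma jmul1r x : x • u = x. Proof. by rewrite jmulC junitP. Qed.

Lemma jmul_suml I (r : seq I) (P : pred I) (F : I -> V) y :
  (\sum_(i <- r | P i) F i) • y = \sum_(i <- r | P i) F i • y.
Proof. exact: (big_morph (fun x => x • y) (fun a b => jmulDl a b y) (jmul0l y)). Qed.
Lemma jmul_sumr I (r : seq I) (P : pred I) (F : I -> V) y :
  y • (\sum_(i <- r | P i) F i) = \sum_(i <- r | P i) y • F i.
Proof. exact: (big_morph (fun x => y • x) (fun a b => jmulDr y a b) (jmul0r y)). Qed.

Lemma fr1 y : y • y = 0 -> y = 0.
Proof.
move=> h; have := @formally_real _ _ A [:: y]; rewrite big_cons big_nil addr0 h.
by move=> /(_ erefl) /= /andP [/eqP].
Qed.
Lemma fr2 y z : y • y + z • z = 0 -> z = 0.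
Proof.
move=> h; have := @formally_real _ _ A [:: y; z]; rewrite !big_cons big_nil addr0 h.
by move=> /(_ erefl) /= /and3P [_ /eqP].
Qed.

(* trilinear form for linearization *)
Definition T3 y a b c := (a • b) • (c • y) - c • ((a • b) • y).

Lemma T3Dl y a a' s b c : T3 y (a + s *: a') b c = T3 y a b c + s *: T3 y a' b c.
Proof.
rewrite /T3 !(jmulDl, jmulZl, jmulDr, jmulZr) scalerBr opprD addrACA.
by [].
Qed.
Lemma T3Dm y a b b' s c : T3 y a (b + s *: b') c = T3 y a b c + s *: T3 y a b' c.
Proof.
by rewrite /T3 !(jmulDl, jmulZl, jmulDr, jmulZr) scalerBr opprD addrACA.
Qed.
Lemma T3Dr y a b c c' s : T3 y a b (c + s *: c') = T3 y a b c + s *: T3 y a b c'.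
Proof.
by rewrite /T3 !(jmulDl, jmulZl, jmulDr, jmulZr) scalerBr opprD addrACA.
Qed.
Lemma T3J y x : T3 y x x x = 0.
Proof. by rewrite /T3 jordan_id subrr. Qed.
Lemma T3C y a b c : T3 y a b c = T3 y b a c.
Proof. by rewrite /T3 (jmulC A a b). Qed.

Lemma expand3 (U W : lmodType R) (F : U -> U -> U -> W)
  (Hl : forall a a' s b c, F (a + s *: a') b c = F a b c + s *: F a' b c)
  (Hm : forall a b b' s c, F a (b + s *: b') c = F a b c + s *: F a b' c)
  (Hr : forall a b c c' s, F a b (c + s *: c') = F a b c + s *: F a b c')
  x z s :
  F (x + s *: z) (x + s *: z) (x + s *: z) =
  F x x x + s *: (F z x x + F x z x + F x x z) +
  (s ^+ 2) *: (F x z z + F z x z + F z z x) + (s ^+ 3) *: F z z z.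
Proof.
rewrite !(Hl, Hm, Hr) !scalerDr !scalerA -!expr2 -!exprSr.
set a := F x x x; set b := F x x z; set c := F x z x; set d := F x z z.
set e := F z x x; set f := F z x z; set g := F z z x; set h := F z z z.
rewrite -!addrA; congr (_ + _).
rewrite (addrCA (s ^+ 2 *: d) (s *: e)) (addrCA (s *: c) (s *: e)).
by rewrite (addrCA (s *: b) (s *: e)) (addrCA (s *: b) (s *: c)).
Qed.

Lemma lin3 (U W : lmodType R) (F : U -> U -> U -> W)
  (Hl : forall a a' s b c, F (a + s *: a') b c = F a b c + s *: F a' b c)
  (Hm : forall a b b' s c, F a (b + s *: b') c = F a b c + s *: F a b' c)
  (Hr : forall a b c c' s, F a b (c + s *: c') = F a b c + s *: F a b c')
  (H0 : forall w, F w w w = 0) x z :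
  F z x x + F x z x + F x x z = 0.
Proof.
have e1 := @expand3 _ _ F Hl Hm Hr x z 1; have e2 := @expand3 _ _ F Hl Hm Hr x z (-1).
rewrite !H0 expr1n !scale1r scaler0 add0r addr0 in e1.
rewrite !H0 sqrrN expr1n !scale1r scaler0 add0r addr0 scaleN1r in e2.
set D1 := F z x x + F x z x + F x x z in e1 e2 *.
set D2 := F x z z + F z x z + F z z x in e1 e2.
clearbody D1 D2.
have : (2 : R) *: D1 = 0.
  rewrite scaler_nat mulr2n.
  have -> : D1 + D1 = (D1 + D2) - (- D1 + D2) by rewrite opprD opprK addrACA subrr addr0.
  by rewrite -e1 -e2 subr0.
by move/eqP; rewrite scaler_eq0 pnatr_eq0 /= => /eqP.
Qed.

Lemma T3lin y x z : T3 y z x x + T3 y x z x + T3 y x x z = 0.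
Proof.
apply: (@lin3 _ _ (T3 y)) => *; [exact: T3Dl|exact: T3Dm|exact: T3Dr|exact: T3J].
Qed.

Lemma L2 x y w : w • ((x • x) • y) =
  ((x • w) • (x • y) - x • ((x • w) • y)) *+ 2 + (x • x) • (w • y).
Proof.
have := T3lin y x w; rewrite /T3 (jmulC A w x) -mulr2n => /eqP.
by rewrite addrA subr_eq0 => /eqP <-.
Qed.

Lemma peirce10 e a b : e • e = e -> e • a = a -> e • b = 0 -> a • b = 0.
Proof.
move=> ee ea eb.
have h1 := T3lin b e a; rewrite /T3 (jmulC A a e) ea eb !jmul0r ee eb jmul0r in h1.
rewrite !sub0r subr0 addrNK in h1.
have h2 := T3lin a e b; rewrite /T3 (jmulC A b e) eb !jmul0l !jmul0r ee ea in h2.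
rewrite !subrr !add0r (jmulC A b a) in h2.
move/eqP: h2; rewrite subr_eq0 => /eqP <-.
by apply/eqP; rewrite -oppr_eq0 h1.
Qed.

Lemma jmulMnr y x n : y • (x *+ n) = (y • x) *+ n.
Proof. elim: n => [|n IH]; first by rewrite !mulr0n jmul0r. by rewrite !mulrS jmulDr IH. Qed.

Definition jpow z n := iter n (fun v => z • v) u.
Lemma jpowS z n : jpow z n.+1 = z • jpow z n. Proof. by []. Qed.
Lemma jpow0 z : jpow z 0 = u. Proof. by []. Qed.
Lemma jpow1 z : jpow z 1 = z. Proof. exact: jmul1r. Qed.

Definition commL z Y := (forall v, z • (v • Y) = (z • v) • Y) /\
  (forall v, (z • z) • (v • Y) = ((z • z) • v) • Y).

Lemma jordan' z w : (z • z) • (z • w) = z • ((z • z) • w).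
Proof. exact: jordan_id. Qed.

Lemma commL_step z Y : commL z Y -> commL z (z • Y) ->
  (z • (z • Y) = (z • z) • Y) /\ commL z (z • (z • Y)).
Proof.
move=> [H1 H2] [K1 K2].
have key : z • (z • Y) = (z • z) • Y.
  by rewrite -H1 (jmulC A z Y).
set Y1 := z • Y in K1 K2 *.
have P v : v • (z • Y1) = ((z • v) • Y1 - z • ((z • v) • Y)) *+ 2 + (z • z) • (v • Y).
  by rewrite /Y1 key L2.
split => //; split => v; rewrite !P.
- rewrite jmulDr jmulMnr jmulBr K1 H1 -jordan'.
  by rewrite [z • (v • Y)]H1.
- rewrite jmulDr jmulMnr jmulBr K2 jordan' [(z • z) • (z • ((z • v) • Y))]jordan' [(z • z) • ((z • v) • Y)]H2 jordan'.
  by rewrite [(z • z) • (v • Y)]H2.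
Qed.

Lemma jpow_commL z n : commL z (jpow z n).
Proof.
suff : commL z (jpow z n) /\ commL z (jpow z n.+1) by case.
elim: n => [|n [IH1 IH2]].
  rewrite jpow1 /=; split; split => v; rewrite ?jmul1r //.
  - by rewrite (jmulC A v z) (jmulC A (z • v) z).
  - rewrite (jmulC A v z) (jmulC A ((z • z) • v) z).
    by rewrite jordan' .
split => //; by case: (@commL_step z (jpow z n) IH1 IH2).
Qed.

Lemma jpow_add z m n : jpow z m • jpow z n = jpow z (m + n).
Proof.
elim: n => [|n IH]; first by rewrite addn0 jpow0 jmul1r.
rewrite addnS !jpowS -IH (jmulC A (jpow z m) (jpow z n)) (jpow_commL z m).1.
by rewrite (jmulC A (z • jpow z n)).
Qed.

Definition jev z (P : {poly R}) : V := \sum_(i < size P) P`_i *: jpow z i.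

Lemma jev_wide z (P : {poly R}) n : (size P <= n)%N -> jev z P = \sum_(i < n) P`_i *: jpow z i.
Proof.
move=> hn; rewrite /jev (big_ord_widen n (fun i => P`_i *: jpow z i) hn).
rewrite big_mkcond /=; apply: eq_bigr => i _; case: ifP => // /negbT.
by rewrite -leqNgt => h; rewrite nth_default // scale0r.
Qed.

Lemma jevD z (P Q : {poly R}) : jev z (P + Q) = jev z P + jev z Q.
Proof.
set n := maxn (size P) (size Q).
rewrite (@jev_wide z (P + Q) n) ?(@jev_wide z P n) ?(@jev_wide z Q n).
- by rewrite -big_split /=; apply: eq_bigr => i _; rewrite coefD scalerDl.
- exact: leq_maxr.
- exact: leq_maxl.
- by apply: leq_trans (size_polyD _ _) _.
Qed.

Lemma jevZ z a (P : {poly R}) : jev z (a *: P) = a *: jev z P.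
Proof.
rewrite (@jev_wide z (a *: P) (size P)) ?size_scale_leq // /jev scaler_sumr.
by apply: eq_bigr => i _; rewrite coefZ scalerA.
Qed.

Lemma jev0 z : jev z 0 = 0.
Proof. by rewrite /jev size_poly0 big_ord0. Qed.

Lemma jevN z (P : {poly R}) : jev z (- P) = - jev z P.
Proof. by rewrite -scaleN1r jevZ scaleN1r. Qed.
Lemma jevB z (P Q : {poly R}) : jev z (P - Q) = jev z P - jev z Q.
Proof. by rewrite jevD jevN. Qed.

Lemma jevC z c : jev z c%:P = c *: u.
Proof.
rewrite (@jev_wide z _ 1) ?size_polyC ?leq_b1 // big_ord1 coefC /=.
by [].
Qed.

Lemma jev_sum z I (r : seq I) (P : pred I) (F : I -> {poly R}) :
  jev z (\sum_(i <- r | P i) F i) = \sum_(i <- r | P i) jev z (F i).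
Proof. exact: (big_morph (jev z) (jevD z) (jev0 z)). Qed.

Lemma jevMX z (P : {poly R}) : jev z (P * 'X) = z • jev z P.
Proof.
have [->|nz] := eqVneq P 0; first by rewrite mul0r jev0 jmul0r.
rewrite /jev size_mulX // big_ord_recl coefMX eqxx scale0r add0r jmul_sumr.
apply: eq_bigr => i _; rewrite coefMX /= jmulZr.
by [].
Qed.

Lemma jev_comm z (P : {poly R}) w : jev z P • (z • w) = z • (jev z P • w).
Proof.
rewrite /jev !jmul_suml jmul_sumr; apply: eq_bigr => i _.
rewrite !jmulZl jmulZr; congr (_ *: _).
rewrite (jmulC A (jpow z i) (z • w)) -((jpow_commL z i).1).
by rewrite (jmulC A w).
Qed.

Lemma jevM z (P Q : {poly R}) : jev z (P * Q) = jev z P • jev z Q.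
Proof.
elim/poly_ind: Q => [|Q c IH]; first by rewrite mulr0 jev0 jmul0r.
rewrite mulrDr mulrA jevD jevMX IH jevD jevMX jmulDr jev_comm.
by rewrite mulrC mul_polyC jevZ jevC jmulZr jmul1r.
Qed.

Definition csys r (c : 'I_r -> V) := [/\ forall i, c i • c i = c i,
  forall i j, i != j -> c i • c j = 0 & \sum_i c i = u].

Lemma sys_mulc r (c : 'I_r -> V) (a : 'I_r -> R) j : csys c ->
  (\sum_i a i *: c i) • c j = a j *: c j.
Proof.
case=> idem orth _; rewrite jmul_suml (bigD1 j) //= big1 ?addr0.
  by rewrite jmulZl idem.
by move=> i /negbTE ij; rewrite jmulZl orth ?scaler0 // ij.
Qed.

Lemma sys_mul r (c : 'I_r -> V) (a b : 'I_r -> R) : csys c ->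
  (\sum_i a i *: c i) • (\sum_i b i *: c i) = \sum_i (a i * b i) *: c i.
Proof.
move=> cs; rewrite jmul_sumr; apply: eq_bigr => i _.
by rewrite jmulZr sys_mulc // scalerA mulrC.
Qed.

Lemma sys_jpow r (c : 'I_r -> V) (a : 'I_r -> R) n : csys c ->
  jpow (\sum_i a i *: c i) n = \sum_i (a i ^+ n) *: c i.
Proof.
move=> cs; elim: n => [|n IH].
  by rewrite jpow0; case: cs => _ _ <-; apply: eq_bigr => i _; rewrite expr0 scale1r.
rewrite jpowS IH sys_mul //; apply: eq_bigr => i _; by rewrite exprS.
Qed.

Lemma sys_jev r (c : 'I_r -> V) (a : 'I_r -> R) P : csys c ->
  jev (\sum_i a i *: c i) P = \sum_i P.[a i] *: c i.
Proof.
move=> cs; rewrite /jev.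
under eq_bigr => k _ do rewrite sys_jpow // scaler_sumr.
rewrite exchange_big /=; apply: eq_bigr => i _.
by rewrite horner_coef scaler_suml; apply: eq_bigr => k _; rewrite scalerA.
Qed.
End Basic.


Lemma quad_map (R : rcfType) (a b : R) :
  map_poly (real_complex R) (('X - a%:P) ^+ 2 + (b ^+ 2)%:P) =
  ('X - (a +i* b)%C%:P) * ('X - (a -i* b)%C%:P).
Proof.
rewrite rmorphD rmorphXn rmorphB /= map_polyX !map_polyC /= rmorphXn.
have e1 : (a +i* b)%C = (a%:C)%C + 'i%C * (b%:C)%C.
  by apply/eqP; rewrite eq_complex /=; simpc.
have e2 : (a -i* b)%C = (a%:C)%C - 'i%C * (b%:C)%C.
  by apply/eqP; rewrite eq_complex /=; simpc.
rewrite e1 e2; set A := (a%:C)%C; set B := (b%:C)%C.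
have Hi : ('i%C%:P : {poly R[i]}) ^+ 2 = -1 by rewrite -rmorphXn /= sqr_i polyCN.
rewrite !polyCD polyCN !polyCM.
have -> : ('X - (A%:P + 'i%C%:P * B%:P)) * ('X - (A%:P - 'i%C%:P * B%:P)) =
  ('X - A%:P) ^+ 2 - ('i%C%:P) ^+ 2 * (B%:P) ^+ 2 by ring.
by rewrite Hi mulN1r opprK expr2.
Qed.

Lemma real_or_quad (R : rcfType) (q : {poly R}) : (1 < size q)%N ->
  (exists x, root q x) \/
  (exists a b : R, b != 0 /\ (('X - a%:P) ^+ 2 + (b ^+ 2)%:P) %| q).
Proof.
move=> sq.
pose f := real_complex R.
set qc := map_poly f q.
have : size qc != 1%N by rewrite size_map_poly; case: (size q) sq => [|[]].
case/closed_rootP => w rw.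
case: (eqVneq (complex.Im w) 0) => hb.
  left; exists (complex.Re w).
  have ew : w = f (complex.Re w) by case: w rw hb => a b /= _ ->.
  move: rw; rewrite ew /root horner_map /=.
  by rewrite /f; move/eqP => [->].
right; exists (complex.Re w), (complex.Im w); split => //.
have rw' : root qc w^*%C.
  rewrite -complex_root_conj.
  have -> : map_poly conjc qc = qc.
    rewrite /qc -map_poly_comp; apply: eq_map_poly => x /=; exact: conjc_real.
  by [].
have uw : uniq_roots [:: w; w^*%C].
  rewrite uniq_rootsE /= inE andbT; move: hb; clear rw rw'; case: w => a b /= hb.
  apply/eqP => -[] /eqP; rewrite -subr_eq0 opprK -mulr2n mulrn_eq0 /= (negbTE hb).
  by [].
have hall : all (root qc) [:: w; w^*%C] by rewrite /= rw rw'.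
have [t ht] := uniq_roots_prod_XsubC hall uw.
rewrite -(dvdp_map f) -/qc ht; apply: dvdp_mull.
rewrite !big_cons big_nil mulr1.
move: rw' hall ht; case: (w) => a b /= _ _ _.
by rewrite quad_map.
Qed.


Section Spec.
Variables (R : realType) (V : vectType R) (A : FRJA R V).
Local Notation "x • y" := (jmul A x y) (at level 40).
Local Notation u := (junit A).
Local Notation jev := (jev A).
Local Notation jpow := (jpow A).

Lemma annih_exists z : exists P : {poly R}, P != 0 /\ jev z P = 0.
Proof.
set d := \dim (fullv : {vspace V}).
set X := [tuple jpow z i | i < d.+1].
have nf : ~~ free X.
  apply/negP; rewrite /free size_tuple => /eqP h.
  by have := dimvS (subvf <<X>>%VS); rewrite h ltnn.
have : ~ (forall k : 'I_d.+1 -> R, \sum_(i < d.+1) k i *: X`_i = 0 -> forall i, k i = 0).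
  by move/freeP; rewrite (negbTE nf).
move/boolp.existsNP => [k] /boolp.not_implyP [hs] /boolp.existsNP [i0 hi0].
exists (\poly_(i < d.+1) k (inord i)); split.
  apply/negP => /eqP /(congr1 (fun p : {poly R} => p`_i0)).
  by rewrite coef_poly ltn_ord inord_val coef0.
rewrite (@jev_wide _ _ A z _ d.+1) ?size_poly //; rewrite -[RHS]hs; apply: eq_bigr => i _.
by rewrite coef_poly ltn_ord inord_val -tnth_nth tnth_mktuple.
Qed.

Definition minann z (m : {poly R}) := [/\ m != 0, jev z m = 0 &
  forall Q, Q != 0 -> jev z Q = 0 -> (size m <= size Q)%N].

Lemma min_annih z : exists m, minann z m.
Proof.
apply: boolp.contrapT => H.
have [P [nz hP]] := annih_exists z.
suff : forall n (P : {poly R}), (size P <= n)%N -> P != 0 -> jev z P = 0 -> False.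
  by move/(_ _ P (leqnn _) nz hP).
elim=> [|n IH] Q hs nzQ hQ.
  by move: nzQ; rewrite -size_poly_eq0 -leqn0 hs.
have : ~ (forall Q', Q' != 0 -> jev z Q' = 0 -> (size Q <= size Q')%N).
  by move=> c; apply: H; exists Q; split.
move=> /boolp.existsNP [Q' /boolp.not_implyP [nz' /boolp.not_implyP [h' /negP]]].
rewrite -ltnNge => lt; apply: (IH Q') => //.
by rewrite -ltnS; apply: leq_trans lt hs.
Qed.

Lemma jev_sq0 z (Y : {poly R}) : jev z (Y * Y) = 0 -> jev z Y = 0.
Proof. by rewrite jevM; apply: fr1. Qed.

Lemma jevCM z c (Y : {poly R}) : jev z (c%:P * Y) = c *: jev z Y.
Proof. by rewrite mul_polyC jevZ. Qed.

Lemma min_root z m q : minann z m -> q %| m -> (1 < size q)%N ->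
  exists x, root q x.
Proof.
case=> nzm hm mmin dq sq.
case: (real_or_quad sq) => // -[a [b [nb dQ]]].
exfalso.
set Q := ('X - a%:P) ^+ 2 + (b ^+ 2)%:P in dQ.
have /dvdpP [r hr] := dvdp_trans dQ dq.
have nzr : r != 0 by apply: contraNneq nzm => r0; rewrite hr r0 mul0r.
have nzQ : Q != 0 by apply: contraNneq nzm => Q0; rewrite hr Q0 mulr0.
have sQ : size Q = 3%N.
  rewrite /Q size_addl; first by rewrite size_exp_XsubC.
  by rewrite size_exp_XsubC; apply: leq_ltn_trans (size_polyC_leq1 _) _.
have lt : (size r < size m)%N by rewrite hr size_mul // sQ addnS /= addn2 ltnS leqnSn.
have e : jev z (('X - a%:P) * r) • jev z (('X - a%:P) * r) +
         jev z (b%:P * r) • jev z (b%:P * r) = 0.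
  rewrite -!jevM -jevD.
  have -> : ('X - a%:P) * r * (('X - a%:P) * r) + b%:P * r * (b%:P * r) = m * r.
    by rewrite hr /Q rmorphXn /=; ring.
  by rewrite jevM hm jmul0l.
have := fr2 e; rewrite jevCM => /eqP; rewrite scaler_eq0 (negbTE nb) /= => /eqP h.
by have := mmin r nzr h; rewrite leqNgt lt.
Qed.

Lemma min_split z m : minann z m ->
  exists s : seq R, uniq s /\ jev z (\prod_(x <- s) ('X - x%:P)) = 0.
Proof.
move=> mm; case: (mm) => nzm hm mmin.
suff H : forall n (q : {poly R}), (size q <= n)%N -> q %| m -> q != 0 ->
    exists s c, [/\ uniq s, c != 0 & q = c *: \prod_(x <- s) ('X - x%:P)].
  have [s [c [us nc em]]] := H _ m (leqnn _) (dvdpp m) nzm.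
  exists s; split => //.
  have : jev z m = c *: jev z (\prod_(x <- s) ('X - x%:P)) by rewrite em jevZ.
  by rewrite hm => /esym /eqP; rewrite scaler_eq0 (negbTE nc) => /eqP.
elim=> [|n IH] q sq dq nq.
  by move: nq; rewrite -size_poly_eq0 -leqn0 sq.
case: (leqP (size q) 1) => s1.
  have /size_poly1P [c nc ->] : size q == 1%N.
    by rewrite eqn_leq s1 lt0n size_poly_eq0.
  by exists [::], c; rewrite big_nil -alg_polyC.
have [x rx] := min_root mm dq s1.
have /factor_theorem [q' eq'] := rx.
have nq' : q' != 0 by apply: contraNneq nq => h; rewrite eq' h mul0r.
have sq' : (size q' <= n)%N.
  by rewrite -ltnS; apply: leq_trans sq; rewrite eq' size_mul ?polyXsubC_eq0 // size_XsubC addn2.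
have dq' : q' %| m by apply: dvdp_trans dq; rewrite eq' dvdp_mulIl.
have [s [c [us nc e]]] := IH q' sq' dq' nq'.
have nx : x \notin s.
  apply/negP => xs; exfalso.
  have : ('X - x%:P) ^+ 2 %| m.
    apply: dvdp_trans dq; rewrite eq' e -scalerAl expr2 dvdpZr //.
    apply: dvdp_mul => //; rewrite (big_rem x) //=; exact: dvdp_mulIl.
  case/dvdpP => r hr.
  have nzr : r != 0 by apply: contraNneq nzm => r0; rewrite hr r0 mul0r.
  have h0 : jev z ((r * ('X - x%:P)) * (r * ('X - x%:P))) = 0.
    have -> : (r * ('X - x%:P)) * (r * ('X - x%:P)) = m * r by rewrite hr; ring.
    by rewrite jevM hm jmul0l.
  have := mmin _ _ (jev_sq0 h0).
  rewrite hr !size_mul ?polyXsubC_eq0 ?expf_neq0 ?polyXsubC_eq0 //.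
  move=> /(_ (mulf_neq0 nzr (negbT (polyXsubC_eq0 x)))); rewrite size_XsubC /= !addnS /=.
  by rewrite ltnn.
exists (x :: s), c; split => //=; first by rewrite nx.
by rewrite eq' e big_cons -scalerAl mulrC.
Qed.

Lemma jev1 z : jev z 1 = u.
Proof. by rewrite -polyC1 jevC scale1r. Qed.

Lemma jevX z : jev z 'X = z.
Proof. by rewrite -[X in jev _ X]mul1r jevMX jev1 jmul1r. Qed.

Lemma spectral z : exists r (f : 'I_r -> V) (ze : 'I_r -> R),
  csys A f /\ z = \sum_i ze i *: f i.
Proof.
have [m mm] := min_annih z; have [s [us hs]] := min_split mm.
set r := size s; pose ze (i : 'I_r) := nth 0 s i.
have zinj : forall i j : 'I_r, ze i = ze j -> i = j.
  move=> i j /eqP; rewrite /ze nth_uniq // => /eqP; exact: val_inj.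
have key : forall P Q : {poly R}, (forall i : 'I_r, P.[ze i] = Q.[ze i]) ->
    jev z P = jev z Q.
  move=> P Q h; apply/eqP; rewrite -subr_eq0 -jevB; apply/eqP.
  have hall : all (root (P - Q)) s.
    apply/allP => x xs; rewrite /root !hornerE.
    have := h (Ordinal (etrans (index_mem x s) xs : (index x s < r)%N)).
    by rewrite /ze /= (nth_index 0 xs) => ->; rewrite subrr.
  have ur : uniq_roots s by rewrite uniq_rootsE.
  have [t ->] := uniq_roots_prod_XsubC hall ur.
  by rewrite jevM hs jmul0r.
pose L (k : 'I_r) := \prod_(j < r | j != k) (('X - (ze j)%:P) * ((ze k - ze j)^-1)%:P).
have hL : forall k i, (L k).[ze i] = (i == k)%:R.
  move=> k i; rewrite horner_prod; case: eqVneq => [->|ik].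
    rewrite big1 // => j jk; rewrite hornerM hornerXsubC hornerC mulfV //.
    by rewrite subr_eq0; apply/eqP => /zinj h; move: jk; rewrite h eqxx.
  by rewrite (bigD1 i) ?ik //= hornerM hornerXsubC subrr !mul0r.
exists r, (fun k => jev z (L k)), ze; split; first split.
- move=> k; rewrite -jevM; apply: key => i; rewrite hornerM hL.
  by case: (i == k); rewrite ?mulr1 ?mulr0.
- move=> k l kl; rewrite -jevM -(jev0 A z); apply: key => i.
  rewrite hornerM !hL horner0; case: eqVneq => [ik|]; last by rewrite mul0r.
  by move: kl; rewrite -ik eq_sym => /negbTE ->; rewrite mulr0.
- rewrite -jev_sum -(jev1 z); apply: key => i; rewrite horner_sum hornerC.
  rewrite (bigD1 i) //= big1 ?addr0 ?hL ?eqxx //.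
  by move=> k /negbTE ki; rewrite hL eq_sym ki.
- rewrite -[LHS](jevX z).
  under eq_bigr => k _ do rewrite -jevZ.
  rewrite -jev_sum; apply: key => i; rewrite horner_sum hornerX.
  rewrite (bigD1 i) //= big1 ?addr0 ?hornerZ ?hL ?eqxx ?mulr1 //.
  by move=> k /negbTE ki; rewrite hornerZ hL eq_sym ki mulr0.
Qed.

Lemma sys_vals r (c : 'I_r -> V) (a : 'I_r -> R) r' (d : 'I_r' -> V) (b : 'I_r' -> R) l :
  csys A c -> csys A d -> d l != 0 ->
  \sum_i a i *: c i = \sum_i b i *: d i -> exists i, b l = a i.
Proof.
move=> cs ds nd e.
pose P := \prod_i ('X - (a i)%:P).
have h1 : jev (\sum_i a i *: c i) P = 0.
  rewrite sys_jev // big1 // => i _.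
  by rewrite /P horner_prod (bigD1 i) //= hornerXsubC subrr mul0r scale0r.
move: h1; rewrite e sys_jev // => /(congr1 (fun v => v • d l)).
rewrite sys_mulc // jmul0l => /eqP; rewrite scaler_eq0 (negbTE nd) orbF.
rewrite /P horner_prod prodf_seq_eq0 => /hasP [i _ /=].
by rewrite hornerXsubC subr_eq0 => /eqP ->; exists i.
Qed.

Lemma interp (S : seq R) (F : R -> R) : exists P : {poly R}, forall x, x \in S -> P.[x] = F x.
Proof.
elim: S => [|x S [P hP]]; first by exists 0.
case: (boolP (x \in S)) => xS.
  by exists P => y; rewrite inE => /orP [/eqP ->|]; [exact: hP|exact: hP].
pose N := \prod_(y <- S) ('X - y%:P).
have Nx : N.[x] != 0.
  rewrite /N horner_prod prodf_seq_neq0; apply/allP => y yS /=.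
  by rewrite hornerXsubC subr_eq0; apply: contraNneq xS => ->.
exists (P + ((F x - P.[x]) / N.[x])%:P * N) => y; rewrite inE => /orP [/eqP ->|yS].
  by rewrite hornerD hornerM hornerC divfK // addrC subrK.
rewrite hornerD hornerM hornerC hP //.
have -> : N.[y] = 0.
  by rewrite /N horner_prod (big_rem y) //= hornerXsubC subrr mul0r.
by rewrite mulr0 addr0.
Qed.

Lemma sys_fun r (c : 'I_r -> V) (a : 'I_r -> R) r' (d : 'I_r' -> V) (b : 'I_r' -> R) F :
  csys A c -> csys A d ->
  \sum_i a i *: c i = \sum_i b i *: d i ->
  \sum_i F (a i) *: c i = \sum_i F (b i) *: d i.
Proof.
move=> cs ds e.
have [P hP] := interp ([seq a i | i <- enum 'I_r] ++ [seq b i | i <- enum 'I_r']) F.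
transitivity (jev (\sum_i a i *: c i) P).
  rewrite sys_jev //; apply: eq_bigr => i _; rewrite hP //.
  by rewrite mem_cat; apply/orP; left; apply/mapP; exists i; rewrite ?mem_enum.
rewrite e sys_jev //; apply: eq_bigr => i _; rewrite hP //.
by rewrite mem_cat; apply/orP; right; apply/mapP; exists i; rewrite ?mem_enum.
Qed.

Lemma sq_nonneg r (c : 'I_r -> V) (g : 'I_r -> R) z j :
  csys A c -> c j != 0 -> z • z = \sum_i g i *: c i -> 0 <= g j.
Proof.
move=> cs nc e.
have [r' [f [ze [fs ez]]]] := spectral z.
have e2 : \sum_i g i *: c i = \sum_i (ze i ^+ 2) *: f i.
  by rewrite -e ez sys_mul //; apply: eq_bigr => i _; rewrite expr2.
have [i ->] := sys_vals fs cs nc (esym e2).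
exact: sqr_ge0.
Qed.
End Spec.


Section Fam.
Variables (R : realType) (V : vectType R) (A : FRJA R V).
Local Notation "x • y" := (jmul A x y) (at level 40).
Local Notation u := (junit A).

Definition fam (F : seq V) := [/\ uniq F, forall e, e \in F -> e • e = e /\ e != 0,
  forall a b, a \in F -> b \in F -> a != b -> a • b = 0 & \sum_(e <- F) e = u].

Lemma fam_size F : fam F -> (size F <= \dim (fullv : {vspace V}))%N.
Proof.
case=> uF ide orth _.
have fr : free (in_tuple F).
  apply/freeP => k hk i.
  have := congr1 (fun v => v • F`_i) hk; rewrite jmul_suml jmul0l (bigD1 i) //=.
  rewrite big1 ?addr0; last first.
    move=> j ji; rewrite jmulZl orth ?scaler0 ?mem_nth //.
    by rewrite nth_uniq // => /eqP /val_inj /eqP; rewrite (negbTE ji).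
  have [ii nz] := ide _ (mem_nth 0 (ltn_ord i)).
  by rewrite jmulZl ii => /eqP; rewrite scaler_eq0 (negbTE nz) orbF => /eqP.
move: fr; rewrite /free => /eqP <-; exact: dimvS (subvf _).
Qed.

Lemma fam_split F g q1 q2 : fam F -> g \in F -> q1 • q1 = q1 -> q1 != 0 ->
  q2 • q2 = q2 -> q2 != 0 -> q1 • q2 = 0 -> g = q1 + q2 ->
  fam [:: q1, q2 & rem g F].
Proof.
case=> uF ide orth sF gF e1 n1 e2 n2 o12 eg.
have g1 : g • q1 = q1 by rewrite eg jmulDl e1 (jmulC A q2) o12 addr0.
have g2 : g • q2 = q2 by rewrite eg jmulDl e2 o12 add0r.
have [gg _] := ide _ gF.
have remP f : f \in rem g F -> f \in F /\ f != g.
  by rewrite (mem_rem_uniq _ uF) inE => /andP [? ?].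
have o1 f : f \in rem g F -> q1 • f = 0.
  move=> /remP [fF fg]; apply: (peirce10 gg g1).
  by rewrite orth // eq_sym.
have o2 f : f \in rem g F -> q2 • f = 0.
  move=> /remP [fF fg]; apply: (peirce10 gg g2).
  by rewrite orth // eq_sym.
have nq12 : q1 != q2 by apply: contra_neq n1 => h; rewrite -e1 {2}h o12.
have nrem1 : q1 \notin rem g F.
  by apply/negP => /o1; rewrite e1; apply/eqP.
have nrem2 : q2 \notin rem g F.
  by apply/negP => /o2; rewrite e2; apply/eqP.
split.
- by rewrite /= inE negb_or nq12 nrem1 nrem2 rem_uniq.
- move=> e; rewrite !inE => /orP [/eqP->|/orP [/eqP->|/remP [eF _]]] //; exact: ide.
- move=> a b; rewrite !inE => /orP [/eqP->|/orP [/eqP->|ha]] /orP [/eqP->|/orP [/eqP->|hb]];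
  rewrite ?eqxx //; move=> ab; first [ by apply: o1 | by apply: o2 | by rewrite jmulC; apply: o1
    | by rewrite jmulC; apply: o2 | by rewrite jmulC o12
    | by have [? ?] := remP _ ha; have [? ?] := remP _ hb; apply: orth].
- by rewrite !big_cons addrA -eg -sF (perm_big _ (perm_to_rem gF)) big_cons.
Qed.

Lemma fam_ext k (p : 'I_k -> V) : (forall i, jprimitive A (p i)) ->
  (forall i j, i != j -> jorth A (p i) (p j)) ->
  exists F, [/\ fam F, forall e, e \in F -> jprimitive A e & forall i, p i \in F].
Proof.
move=> hp ho.
have pi i : p i • p i = p i /\ p i != 0.
  by case: (hp i) => ? /eqP ? _.
set S := \sum_i p i; set q := u - S.
have pS i : p i • S = p i.
  rewrite /S jmul_sumr (bigD1 i) //= big1 ?addr0; first by case: (pi i).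
  by move=> j ji; apply: ho; rewrite eq_sym.
have SS : S • S = S.
  by rewrite {1}/S jmul_suml; apply: eq_bigr => i _; rewrite pS.
have qq : q • q = q.
  rewrite /q jmulBl !jmulBr jmul1l jmul1r SS jmul1l.
  by rewrite subrr subr0.
have qp i : q • p i = 0.
  by rewrite /q jmulBl jmul1l jmulC pS subrr.
have pinj : injective p.
  move=> i j e; apply/eqP; apply: contraT => ij.
  have := ho _ _ ij; rewrite /jorth -e; case: (pi i) => -> /eqP; done.
have qnp i : q != 0 -> q != p i.
  move=> nq; apply: contra_neq nq => e; by rewrite -qq {2}e qp.
have sP : \sum_(e <- [seq p i | i <- enum 'I_k]) e = S.
  by rewrite big_map big_enum.
pose F0 := if q == 0 then [seq p i | i <- enum 'I_k] else q :: [seq p i | i <- enum 'I_k].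
have pF0 i : p i \in F0.
  have h : p i \in [seq p i | i <- enum 'I_k] by apply: map_f; rewrite mem_enum.
  by rewrite /F0; case: ifP => _ //; rewrite inE h orbT.
have mP e : e \in [seq p i | i <- enum 'I_k] -> exists i, e = p i.
  by case/mapP => i _ ->; exists i.
have fF0 : fam F0.
  have um : uniq [seq p i | i <- enum 'I_k] by rewrite map_inj_uniq ?enum_uniq.
  have om a b : a \in [seq p i | i <- enum 'I_k] -> b \in [seq p i | i <- enum 'I_k] ->
      a != b -> a • b = 0.
    move=> /mP [i ->] /mP [j ->] ij; apply: ho; by apply: contra_neq ij => ->.
  rewrite /F0; case: (eqVneq q 0) => [q0|nq].
    split => //; first by move=> e /mP [i ->]; exact: pi.
    by rewrite sP; move/eqP: q0; rewrite subr_eq0 => /eqP.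
  split.
  - rewrite /= um andbT; apply/negP => /mP [i e]; by move: (qnp i nq); rewrite e eqxx.
  - move=> e; rewrite inE => /orP [/eqP ->|/mP [i ->]]; [by split|exact: pi].
  - move=> a b; rewrite !inE => /orP [/eqP->|ha] /orP [/eqP->|hb]; rewrite ?eqxx //.
    + by move: hb => /mP [i ->].
    + by move: ha => /mP [i ->]; rewrite jmulC.
    + exact: om.
  - by rewrite big_cons sP /q subrK.
have step : forall F, fam F -> (forall i, p i \in F) ->
    ~ (forall e, e \in F -> jprimitive A e) ->
    exists F', [/\ fam F', forall i, p i \in F' & size F' = (size F).+1].
  move=> F fF pF /boolp.existsNP [g /boolp.not_implyP [gF ng]].
  have [gg gnz] : g • g = g /\ g != 0 by case: fF => _ ide _ _; exact: ide.
  have [q1 [q2 [[e1 n1] [e2 n2] o12 eg]]] : exists q1 q2,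
    [/\ jidempotent A q1 /\ q1 <> 0, jidempotent A q2 /\ q2 <> 0,
        jorth A q1 q2 & g = q1 + q2].
    by apply: boolp.contrapT => h; apply: ng; split => //; apply/eqP.
  have fF' := fam_split fF gF e1 (introN eqP n1) e2 (introN eqP n2) o12 eg.
  exists [:: q1, q2 & rem g F]; split => //.
    move=> i; rewrite !inE (mem_rem_uniq _ (let: And4 u _ _ _ := fF in u)) inE pF andbT.
    by apply/orP; right; apply/orP; right; apply/eqP => ep; apply: ng; rewrite -ep; exact: hp.
  rewrite /= size_rem //; by case: (F) gF.
suff H : forall n F, (\dim (fullv : {vspace V}) - size F <= n)%N -> fam F ->
    (forall i, p i \in F) ->
    exists F, [/\ fam F, forall e, e \in F -> jprimitive A e & forall i, p i \in F].
  exact: (H _ F0 (leqnn _) fF0 pF0).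
elim=> [|n IH] F hn fF pF;
  (case: (boolp.pselect (forall e, e \in F -> jprimitive A e)) => [allp|];
     first by exists F);
  move=> /(step F fF pF) [F' [fF' pF' sF']]; have := fam_size fF' => hsz.
  by exfalso; lia.
by apply: (IH F') => //; lia.
Qed.
End Fam.


Section Main.
Variables (R : realType) (V : vectType R) (A : FRJA R V).
Local Notation "x • y" := (jmul A x y) (at level 40).
Local Notation u := (junit A).

Lemma frame_csys r (c : 'I_r -> V) : jordan_frame A c -> csys A c.
Proof. by case=> hp ho hs; split => // i; case: (hp i). Qed.

Lemma frame_nz r (c : 'I_r -> V) i : jordan_frame A c -> c i != 0.
Proof. by case=> hp _ _; case: (hp i) => _ /eqP. Qed.

Lemma argmax r (f : 'I_r -> R) : (0 < r)%N -> exists j0, forall j, f j <= f j0.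
Proof.
case: r f => // r f _; exists [arg max_(i > ord0) f i]%O.
case: (arg_maxP f (erefl true : (predT : {pred 'I_r.+1}) ord0)) => j _ H.
by move=> j'; apply: H.
Qed.

Lemma jexp_frame r (c : 'I_r -> V) (a : 'I_r -> R) : jordan_frame A c ->
  jexp A (\sum_i a i *: c i) = \sum_i expR (a i) *: c i.
Proof.
move=> fc; rewrite /jexp.
set P := (X in xget _ X).
have hP : P (\sum_i expR (a i) *: c i) by exists r, c, a.
have := xgetPex 0 (ex_intro _ _ hP).
case=> r' [c' [lam [[fc' e] ->]]].
apply: sys_fun => //; [exact: frame_csys|exact: frame_csys].
Qed.

Lemma unorm_frame r (c : 'I_r -> V) (a : 'I_r -> R) j0 : jordan_frame A c ->
  (forall j, `|a j| <= `|a j0|) -> unorm A (\sum_i a i *: c i) = `|a j0|.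
Proof.
move=> fc hj; rewrite /unorm.
set E := (X in sup X).
have Ej0 : E `|a j0| by exists (a j0) => //; exists r, c, a; split => //; exists j0.
have ub : ubound E `|a j0|.
  move=> e [l [r' [c' [lam [[fc' el] [i <-]]]]] <-].
  have [j ->] := sys_vals (frame_csys fc) (frame_csys fc') (frame_nz i fc') el.
  exact: hj.
apply/le_anti/andP; split; first by apply: ge_sup; [exists `|a j0| | exact: ub].
by apply: (ub_le_sup _ Ej0); exists `|a j0|.
Qed.

Lemma inf_ray (m : R) : inf [set b | m <= b] = m.
Proof.
apply/le_anti/andP; split.
  have hl : has_lbound [set b | m <= b] by exists m => b.
  exact: (ge_inf hl (lexx m)).
by apply: lb_le_inf; [exists m => /= | move=> b].
Qed.

Lemma Mxy_frame r (c : 'I_r -> V) (al be : 'I_r -> R) j0 : jordan_frame A c ->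
  (forall j, al j - be j <= al j0 - be j0) ->
  Mxy A (\sum_i expR (al i) *: c i) (\sum_i expR (be i) *: c i) =
  expR (al j0 - be j0).
Proof.
move=> fc hj; rewrite /Mxy -[RHS]inf_ray; congr inf.
have cs := frame_csys fc.
apply/seteqP; split => b /=.
- case=> z hz.
  have : 0 <= b * expR (be j0) - expR (al j0).
    apply: (sq_nonneg (z := z) (g := fun i => b * expR (be i) - expR (al i)) cs (frame_nz j0 fc)).
    rewrite -hz scaler_sumr -sumrB; apply: eq_bigr => i _.
    by rewrite scalerA scalerBl.
  rewrite subr_ge0 expRB ler_pdivrMr ?expR_gt0 //.
- move=> hb.
  have g0 i : 0 <= b * expR (be i) - expR (al i).
    rewrite subr_ge0; apply: le_trans (_ : expR (al j0 - be j0) * expR (be i) <= _).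
      rewrite -expRD ler_expR; have := hj i; lra.
    by rewrite ler_wpM2r // ltW ?expR_gt0.
  exists (\sum_i Num.sqrt (b * expR (be i) - expR (al i)) *: c i).
  rewrite sys_mul // scaler_sumr -sumrB; apply: eq_bigr => i _.
  by rewrite -expr2 sqr_sqrtr // scalerA scalerBl.
Qed.

Lemma fam_frame F : fam A F -> (forall e, e \in F -> jprimitive A e) ->
  jordan_frame A (fun j : 'I_(size F) => nth 0 F j).
Proof.
case=> uF ide orth sF hp; split.
- move=> i; apply: hp; exact: mem_nth.
- move=> i j ij; apply: orth; rewrite ?mem_nth //.
  by rewrite nth_uniq //.
- by rewrite -sF (big_nth 0) big_mkord.
Qed.

Lemma span_rep F k (p : 'I_k -> V) x : uniq F -> (forall i, p i \in F) ->
  x \in <<[seq p i | i <- enum 'I_k]>>%VS ->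
  exists a : 'I_(size F) -> R, x = \sum_j a j *: nth 0 F j.
Proof.
move=> uF pF hx.
set X := in_tuple [seq p i | i <- enum 'I_k].
have := coord_span (X := X) hx; set co := coord X => ->.
have rep (v : V) : v \in F -> exists d : 'I_(size F) -> R, v = \sum_j d j *: nth 0 F j.
  move=> vF; have ix : (index v F < size F)%N by rewrite index_mem.
  exists (fun j => (j == Ordinal ix)%:R); rewrite (bigD1 (Ordinal ix)) //= eqxx scale1r.
  rewrite big1 ?addr0 ?nth_index //.
  by move=> j /negbTE ->; rewrite scale0r.
have XF (i : 'I_(size X)) : X`_i \in F.
  have : X`_i \in [seq p i | i <- enum 'I_k] by apply: mem_nth.
  by case/mapP => i' _ ->.
pose d i := sval (boolp.cid (rep _ (XF i))).
have hd (i : 'I_(size X)) : X`_i = \sum_j d i j *: nth 0 F j by rewrite /d; case: boolp.cid.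
exists (fun j => \sum_(i < size [seq p i | i <- enum (ordinal k)]) co i x * d i j).
under eq_bigr => i _ do rewrite hd scaler_sumr.
rewrite exchange_big /=; apply: eq_bigr => j _.
by rewrite scaler_suml; apply: eq_bigr => i _; rewrite scalerA.
Qed.

Lemma triv_all (h : u = 0) (v : V) : v = 0.
Proof. by rewrite -(jmul1l A v) h jmul0l. Qed.

Lemma triv_unorm (h : u = 0) v : unorm A v = 0.
Proof.
rewrite /unorm; set E := (X in sup X).
have -> : E = set0; last exact: sup0.
apply/seteqP; split => // e [l [r [c [lam [[fc _] [i _]]]]] _].
by have := frame_nz i fc; rewrite (triv_all h (c i)) eqxx.
Qed.

Lemma triv_Mxy (h : u = 0) a b : Mxy A a b = 0.
Proof.
rewrite /Mxy; set E := (X in inf X).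
have -> : E = setT.
  apply/seteqP; split => // b0 _; exists 0.
  exact: (etrans (triv_all h _) (esym (triv_all h _))).
apply: inf_out => -[_ [l hl]].
have := hl (l - 1) I; lra.
Qed.
End Main.

Theorem lemma3p1 (R : realType) (V : vectType R) (A : FRJA R V)
    (k : nat) (p : 'I_k -> V) :
  (forall i, jprimitive A (p i)) ->
  (forall i j, i != j -> jorth A (p i) (p j)) ->
  (forall x y : V,
      x \in <<[seq p i | i <- enum 'I_k]>>%VS ->
      y \in <<[seq p i | i <- enum 'I_k]>>%VS ->
      dT A (jexp A x) (jexp A y) = unorm A (x - y)) /\
  (forall x w : V,
      x \in <<[seq p i | i <- enum 'I_k]>>%VS ->
      w \in <<[seq p i | i <- enum 'I_k]>>%VS ->
      unorm A w = 1 ->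
      forall s t : R,
        dT A (jexp A (t *: w + x)) (jexp A (s *: w + x)) = `|t - s|).
Proof.
move=> hp ho.
case: (eqVneq (junit A) 0) => [u0|un0].
  split.
    by move=> x y _ _; rewrite triv_unorm // /dT !triv_Mxy // ln0 // maxxx.
  by move=> x w _ _; rewrite triv_unorm // => /eqP; rewrite eq_sym oner_eq0.
have [F [fF hpF pF]] := fam_ext hp ho.
case: (fF) => uF _ _ sF.
have fc := fam_frame fF hpF.
have r0 : (0 < size F)%N.
  by move: un0; rewrite -sF; case: (F) => //; rewrite big_nil eqxx.
have part1 : forall x y : V,
    x \in <<[seq p i | i <- enum 'I_k]>>%VS ->
    y \in <<[seq p i | i <- enum 'I_k]>>%VS ->
    dT A (jexp A x) (jexp A y) = unorm A (x - y).
  move=> x y hx hy.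
  have [a ->] := span_rep uF pF hx; have [b ->] := span_rep uF pF hy.
  rewrite !jexp_frame //.
  have [j1 h1] := argmax (fun j => a j - b j) r0.
  have [j2 h2] := argmax (fun j => b j - a j) r0.
  have [j3 h3] := argmax (fun j => `|a j - b j|) r0.
  rewrite /dT (Mxy_frame fc h1) (Mxy_frame fc h2) !expRK.
  have -> : \sum_j a j *: F`_j - \sum_j b j *: F`_j = \sum_j (a j - b j) *: F`_j.
    by rewrite -sumrB; apply: eq_bigr => j _; rewrite scalerBl.
  rewrite (unorm_frame fc h3).
  apply/le_anti/andP; split.
    rewrite ge_max; apply/andP; split.
      by apply: le_trans (h3 j1); exact: ler_norm.
    by apply: le_trans (h3 j2); rewrite distrC; exact: ler_norm.
  case: (lerP 0 (a j3 - b j3)) => hs.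
    by rewrite ger0_norm // le_max (h1 j3).
  by rewrite ltr0_norm // opprB le_max (h2 j3) orbT.
split; first exact: part1.
move=> x w hx hw hw1 s t.
rewrite part1 ?memvD ?memvZ //.
have -> : t *: w + x - (s *: w + x) = (t - s) *: w.
  by rewrite opprD addrACA subrr addr0 scalerBl.
have [o ew] := span_rep uF pF hw; rewrite ew in hw1 *.
have [j4 h4] := argmax (fun j => `|o j|) r0.
rewrite (unorm_frame fc h4) in hw1.
rewrite scaler_sumr; under eq_bigr => j _ do rewrite scalerA.
rewrite (unorm_frame (j0 := j4) fc) ?normrM ?hw1 ?mulr1 //.
move=> j; rewrite !normrM; apply: ler_piMr => //; rewrite -hw1; exact: h4.
Qed.
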